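(* Let $G=(V,E)$ be a finite, connected, simple graph with at least two vertices and generic weights $(w_x)_{x\in\Sigma}$, $\Sigma=V\cup E$; let $M$ be the ground state and $x\in\Sigma$. Suppose the weight of some $y\in\Sigma$ is increased or decreased by $\varepsilon<F_G(x)$, the resulting weights being generic, and let $\tilde M$ be the ground state for the new weights. Then $x\notin M\,\Delta\,\tilde M$.
   Context: A matching of $G$ is a set $M\subset\Sigma$ such that every vertex either belongs to $M$ or is an endpoint of exactly one edge of $M$, but not both. $H(M)=\sum_{z\in M}w_z$; the ground state is the matching minimising $H$. Weights are generic if no nontrivial integer combination of finitely many weights vanishes. For $x\in\Sigma$, $M_{G,x,1}$ (resp. $M_{G,x,0}$) is the matching of minimal weight among those containing $x$ (resp. not containing $x$). The transition point is $K_{G,x}=H(M_{G,x,0})-H(M_{G,x,1})+w_x$ and the flexibility of $x$ is $F_G(x)=|K_{G,x}-w_x|$; all computed with the original weights. *)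

(* Defs.v *)
From HB Require Import structures.
From mathcomp Require Import all_boot all_order all_algebra.
Set Implicit Arguments. Unset Strict Implicit. Unset Printing Implicit Defensive.
Import Order.TTheory GRing.Theory Num.Theory.
Local Open Scope ring_scope.

(* A simple graph on a finite vertex type V is given by a symmetric,
   irreflexive adjacency relation adj.  Edges are the 2-element sets
   {u, v} with adj u v. *)
Definition is_edge (V : finType) (adj : rel V) : pred {set V} :=
  fun e => [exists u, exists v, adj u v && (e == [set u; v])].

Definition edge (V : finType) (adj : rel V) := {e : {set V} | is_edge adj e}.

Notation Sigma V adj := (V + edge adj)%type.

Section Matchings.
Variables (V : finType) (adj : rel V) (R : realFieldType).
Variable w : Sigma V adj -> R.

Definition deg_in (M : {set Sigma V adj}) (v : V) : nat :=
  #|[set e : edge adj | (inr e \in M) && (v \in val e)]|.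

Definition is_matching (M : {set Sigma V adj}) : bool :=
  [forall v : V, if inl v \in M then deg_in M v == 0%N else deg_in M v == 1%N].

Definition H (M : {set Sigma V adj}) : R := \sum_(z in M) w z.

Definition ground_state (M : {set Sigma V adj}) : Prop :=
  is_matching M /\ forall M', is_matching M' -> H M <= H M'.

Definition generic : Prop :=
  forall c : Sigma V adj -> int, (exists z, c z != 0) ->
    \sum_(z : Sigma V adj) (c z)%:~R * w z != 0.

Definition min_matching (P : pred {set Sigma V adj}) : option {set Sigma V adj} :=
  let Q := [pred M | is_matching M && P M] in
  if [pick M in Q] is Some M0 then Some (Order.arg_min M0 (fun M => M \in Q) (fun M => H M)) else None.

Definition Mx (x : Sigma V adj) (b : bool) : {set Sigma V adj} :=
  odflt set0 (min_matching (fun M : {set Sigma V adj} => (x \in M) == b)).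

Definition transition_point (x : Sigma V adj) : R :=
  H (Mx x false) - H (Mx x true) + w x.

Definition flexibility (x : Sigma V adj) : R := `|transition_point x - w x|.

End Matchings.

(* Main.v *)
Require Import Defs.
From HB Require Import structures.
From mathcomp Require Import all_boot all_order all_algebra.
From mathcomp Require Import lra.
Import Order.TTheory GRing.Theory Num.Theory.
Local Open Scope ring_scope.

Lemma Mx_spec (V : finType) (adj : rel V) (R : realFieldType)
  (w : Sigma V adj -> R) (x : Sigma V adj) (b : bool) (Z : {set Sigma V adj}) :
  is_matching Z -> (x \in Z) == b ->
  [/\ is_matching (Mx w x b), (x \in Mx w x b) == b & H w (Mx w x b) <= H w Z].
Proof.
move=> mZ xZ; rewrite /Mx /min_matching.
case: pickP => [M0 HM0|none]; last first.
  by have /negP[] := negbT (none Z); rewrite inE; apply/andP.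
rewrite /=; case: arg_minP => // i /= /andP[mi xi] Hi.
by split => //; apply: Hi; apply/andP.
Qed.

Lemma H_change (V : finType) (adj : rel V) (R : realFieldType)
  (w w' : Sigma V adj -> R) (y : Sigma V adj)
  (w'_other : forall z, z != y -> w' z = w z) (Z : {set Sigma V adj}) :
  H w' Z = H w Z + (y \in Z)%:R * (w' y - w y).
Proof.
rewrite /H.
have -> : \sum_(z in Z) w' z = \sum_(z in Z) (w z + (w' z - w z)).
  by apply: eq_bigr => z _; rewrite addrC subrK.
rewrite big_split /=; congr (_ + _).
case: (boolP (y \in Z)) => yZ.
  rewrite (bigD1 y) //= big1 ?addr0 ?mul1r // => z /andP[_ zy].
  by rewrite w'_other // subrr.
rewrite mul0r big1 // => z zZ; rewrite w'_other ?subrr //.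
by apply: contraNneq yZ => <-.
Qed.

Theorem lemma2p11 (V : finType) (adj : rel V) (R : realFieldType)
  (adj_sym : symmetric adj) (adj_irr : irreflexive adj)
  (G_conn : forall u v : V, connect adj u v) (G_two : (1 < #|V|)%N)
  (w : Sigma V adj -> R) (w_gen : generic w)
  (M : {set Sigma V adj}) (M_gs : ground_state w M)
  (x y : Sigma V adj) (eps : R) (eps_ge0 : 0 <= eps)
  (eps_lt : eps < flexibility w x)
  (w' : Sigma V adj -> R)
  (w'_y : w' y = w y + eps \/ w' y = w y - eps)
  (w'_other : forall z, z != y -> w' z = w z)
  (w'_gen : generic w')
  (Mt : {set Sigma V adj}) (Mt_gs : ground_state w' Mt) :
  x \notin (M :\: Mt) :|: (Mt :\: M).
Proof.
case: M_gs => mM Mmin; case: Mt_gs => mMt Mtmin.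
have key : H w Mt - H w M <= eps.
  have := Mtmin M mM; rewrite !(@H_change _ _ _ w w' y w'_other).
  case: w'_y => ->; case: (y \in M); case: (y \in Mt);
    rewrite /= ?mul1r ?mul0r; lra.
move: eps_lt; rewrite /flexibility /transition_point.
have -> : H w (Mx w x false) - H w (Mx w x true) + w x - w x
          = H w (Mx w x false) - H w (Mx w x true) by rewrite addrK.
move=> eps_lt.
apply/negP; rewrite !inE => /orP[] /andP[xn xi].
- have [m0 x0 h0] := @Mx_spec _ _ _ w x false Mt mMt (introT eqP (negbTE xn)).
  have [m1 x1 h1] := @Mx_spec _ _ _ w x true M mM (introT eqP xi).
  have h2 := Mmin _ m0; have h3 := Mmin _ m1.
  move: eps_lt; rewrite ger0_norm; lra.
- have [m0 x0 h0] := @Mx_spec _ _ _ w x false M mM (introT eqP (negbTE xn)).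
  have [m1 x1 h1] := @Mx_spec _ _ _ w x true Mt mMt (introT eqP xi).
  have h2 := Mmin _ m0; have h3 := Mmin _ m1.
  move: eps_lt; rewrite ler0_norm; lra.
Qed.
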